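(* Let $k\ge2$, $\theta\in\mathbb{R}\setminus\mathbb{Q}$, $p_1,\ldots,p_k\in\mathbb{Z}\setminus\{0\}$ with $\sum_{j=1}^kp_j=0$, and $\xi_1,\ldots,\xi_{k-1}\in\mathbb{Q}\cap[0,1)$ with $\{\sum_{j=1}^{k-1}\xi_j\}\in(0,1)\setminus\{1/2\}$. Consider System A: $\hat\theta_j=p_j\theta+\xi_j$ ($1\le j\le k-1$), $\hat\theta_k=p_k\theta$; and System B: $\hat\theta_j=p_j\theta+\xi_j$ ($1\le j\le k-1$), $\hat\theta_{k,l}=\mathrm{sgn}(p_k)\theta+\frac{l}{|p_k|}$ ($0\le l\le|p_k|-1$). Then Systems A and B are equivalent, i.e. they have the same effective difference number.
   Context: For a system $\hat\theta_i=q_i\theta+\zeta_i$, $i\in I$ ($I$ finite), with $\theta$ irrational, $q_i\in\mathbb{Z}\setminus\{0\}$, $\zeta_i\in\mathbb{Q}\cap[0,1)$, and for $\eta\in\mathbb{Q}$, set $\eta(\zeta_i)=\{\zeta_i-q_i\eta\}$ (fractional part), $k_0^+(\eta)=\#\{i:\eta(\zeta_i)=0,q_i>0\}$, $k_0^-(\eta)=\#\{i:\eta(\zeta_i)=0,q_i<0\}$. The absolute difference number for $\eta$ is $|k_0^+(\eta)-k_0^-(\eta)|$, and the effective difference number of the system is $\max\{|k_0^+(\eta)-k_0^-(\eta)|:\eta\in\mathbb{Q}\}$. Two such systems are called equivalent if their effective difference numbers coincide. In System A the $k$-th equation has $\zeta=0$. $\mathrm{sgn}(a)=\pm1$ according as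 $\pm a>0$. *)

(* Defs.v *)
From mathcomp Require Import all_boot all_order all_algebra.
Set Implicit Arguments. Unset Strict Implicit. Unset Printing Implicit Defensive.
Import Order.TTheory GRing.Theory Num.Theory.
Local Open Scope ring_scope.

(* A system  hat_theta_i = q_i theta + zeta_i  (i in a finite index set) is
   represented by the finite list of its coefficient pairs (q_i, zeta_i). *)
Definition system := seq (int * rat).

Definition frac_part (x : rat) : rat := x - (Num.floor x)%:~R.

Definition eta_shift (eta : rat) (c : int * rat) : rat :=
  frac_part (c.2 - c.1%:~R * eta).

Definition k0p (S : system) (eta : rat) : nat :=
  count (fun c => (eta_shift eta c == 0) && (0 < c.1)) S.
Definition k0m (S : system) (eta : rat) : nat :=
  count (fun c => (eta_shift eta c == 0) && (c.1 < 0)) S.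

Definition abs_diff_number (S : system) (eta : rat) : nat :=
  `|(k0p S eta)%:Z - (k0m S eta)%:Z|%N.

Definition is_eff_diff_number (S : system) (n : nat) : Prop :=
  (exists eta : rat, abs_diff_number S eta = n) /\
  (forall eta : rat, (abs_diff_number S eta <= n)%N).

Definition equivalent (S1 S2 : system) : Prop :=
  forall n : nat, is_eff_diff_number S1 n <-> is_eff_diff_number S2 n.

(* Systems A and B of Lemma 4.2; indices 1..k of the paper are 0..k-1 here. *)
Definition systemA (k : nat) (p : nat -> int) (xi : nat -> rat) : system :=
  [seq (p j, xi j) | j <- iota 0 k.-1] ++ [:: (p k.-1, 0)].

Definition systemB (k : nat) (p : nat -> int) (xi : nat -> rat) : system :=
  [seq (p j, xi j) | j <- iota 0 k.-1] ++
  [seq (Num.sg (p k.-1), (l%:R / (`|p k.-1|%N)%:R : rat)) | l <- iota 0 `|p k.-1|%N].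

(* Main.v *)
Require Import Defs.
From mathcomp Require Import all_boot all_order all_algebra.
From mathcomp Require Import reals zify ring.
Import Order.TTheory GRing.Theory Num.Theory.
Local Open Scope ring_scope.

Lemma frac0P (x : rat) : reflect (exists z : int, x = z%:~R) (frac_part x == 0).
Proof.
apply: (iffP eqP) => [h|[z ->]].
  exists (Num.floor x); move/eqP: h; rewrite /frac_part subr_eq0 => /eqP //.
rewrite /frac_part (@floor_def _ _ z) ?subrr //.
by rewrite lexx /= ltr_int ltrDl.
Qed.

Section Key.
Variables (n : nat) (e : rat).
Hypothesis n0 : (0 < n)%N.

Lemma keyC l : (exists z : int, l%:R / n%:R - e = z%:~R) -> exists m : int, n%:R * e = m%:~R.
Proof.
case=> z hz; exists (l%:Z - n%:Z * z).
have hn : (n%:R : rat) != 0 by rewrite pnatr_eq0 -lt0n.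
have -> : e = l%:R / n%:R - z%:~R by rewrite -hz; ring.
rewrite intrB intrM mulrBr mulrCA divff // mulr1. done.
Qed.

Lemma keyA l1 l2 : (l1 < n)%N -> (l2 < n)%N ->
  (exists z : int, l1%:R / n%:R - e = z%:~R) ->
  (exists z : int, l2%:R / n%:R - e = z%:~R) -> l1 = l2.
Proof.
move=> h1 h2 [z1 e1] [z2 e2].
have hn : (n%:R : rat) != 0 by rewrite pnatr_eq0 -lt0n.
have : (l1%:Z - l2%:Z)%:~R = (n%:Z * (z1 - z2))%:~R :> rat.
  rewrite intrM !intrB -e1 -e2 /=. field. done.
move/intr_inj => h.
have [d0|[d0|d0]] : (z1 - z2 = 0 \/ 1 <= z1 - z2 \/ z1 - z2 <= -1)%R by lia.
- rewrite d0 mulr0 in h; lia.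
- have : (n%:Z * 1 <= n%:Z * (z1 - z2))%R by rewrite ler_pM2l //; lia.
  lia.
- have : (n%:Z * (z1 - z2) <= n%:Z * -1)%R by rewrite ler_pM2l //; lia.
  lia.
Qed.

Lemma keyB : (exists m : int, n%:R * e = m%:~R) ->
  exists2 l, (l < n)%N & exists z : int, l%:R / n%:R - e = z%:~R.
Proof.
case=> m hm.
have hn : (n%:R : rat) != 0 by rewrite pnatr_eq0 -lt0n.
have hn' : (n%:Z != 0) by move: n0; lia.
exists `|(m %% n%:Z)%Z|%N.
  have := ltz_mod m hn'. have := modz_ge0 m hn'. lia.
exists (- (m %/ n%:Z)%Z).
have he : e = m%:~R / n%:R by rewrite -hm; field.
rewrite natr_absz ger0_norm ?modz_ge0 // he.
have Hm : (m%:~R : rat) = (m %/ n%:Z)%Z%:~R * n%:R + (m %% n%:Z)%Z%:~R.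
  by rewrite {1}(divz_eq m n%:Z) intrD intrM.
rewrite Hm intrN; field; done.
Qed.
End Key.

Lemma tail_count (p : int) (eta : rat) (f : int -> bool) : p != 0 -> f (Num.sg p) = f p ->
 count (fun c => (eta_shift eta c == 0) && f c.1)
   [seq (Num.sg p, (l%:R / (`|p|%N)%:R : rat)) | l <- iota 0 `|p|%N]
 = count (fun c => (eta_shift eta c == 0) && f c.1) [:: (p, 0)].
Proof.
move=> p0 hf; rewrite count_map /= addn0.
set n := `|p|%N. set e := (Num.sg p)%:~R * eta.
have n0 : (0 < n)%N by rewrite /n absz_gt0.
rewrite (@eq_count _ _ (fun l => (frac_part (l%:R / n%:R - e) == 0) && f p)); last first.
  by move=> l; rewrite /= /eta_shift /= hf.
case: (f p); last by rewrite andbF (@eq_count _ _ pred0) ?count_pred0 // => l; rewrite andbF.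
under eq_count => l do rewrite andbT.
have hne : n%:R * e = p%:~R * eta.
  by rewrite /e /n natr_absz mulrA -intrM mulrC [`|p| * _]mulrC mulr_sg_norm mulrC.
case: (boolP (eta_shift eta (p, 0) == 0)) => H.
- have ex : exists m : int, n%:R * e = m%:~R.
    move/frac0P: H => [z hz]; exists (- z); rewrite hne intrN -hz /=; ring.
  have [l0 hl0 Pl0] := @keyB n e n0 ex.
  rewrite (@eq_in_count _ _ (pred1 l0)).
    by rewrite count_uniq_mem ?iota_uniq // mem_iota add0n hl0.
  move=> l; rewrite mem_iota add0n => hl /=.
  apply/idP/idP.
    by move/frac0P => Pl; apply/eqP; apply: (@keyA n e n0 _ _ hl hl0 Pl Pl0).
  by move/eqP ->; apply/frac0P.
- rewrite (@eq_count _ _ pred0) ?count_pred0 //.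
  move=> l /=; apply/negP => /frac0P Pl.
  have [m hm] := @keyC n e n0 _ Pl.
  move/negP: H; apply; apply/frac0P; exists (- m).
  rewrite /= intrN -hm hne; ring.
Qed.

Theorem lemma4p2 (R : realType) (k : nat) (theta : R) (p : nat -> int) (xi : nat -> rat) :
  (2 <= k)%N ->
  (forall q : rat, theta != ratr q) ->
  (forall j, (j < k)%N -> p j != 0) ->
  \sum_(j < k) p j = 0 ->
  (forall j, (j < k.-1)%N -> 0 <= xi j < 1) ->
  frac_part (\sum_(j < k.-1) xi j) != 0 ->
  frac_part (\sum_(j < k.-1) xi j) != 1 / 2 ->
  equivalent (systemA k p xi) (systemB k p xi).
Proof.
move=> h2 _ hp _ _ _ _.
have hpk : p k.-1 != 0 by apply: hp; rewrite prednK //; apply: leq_trans h2.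
have E : forall eta, abs_diff_number (systemA k p xi) eta = abs_diff_number (systemB k p xi) eta.
  move=> eta; rewrite /abs_diff_number /k0p /k0m /systemA /systemB !count_cat.
  rewrite (@tail_count _ eta (fun z => 0 < z)) ?sgr_gt0 //.
  by rewrite (@tail_count _ eta (fun z => z < 0)) ?sgr_lt0.
move=> n; rewrite /is_eff_diff_number; split.
  by case=> [[e he] hb]; split; [exists e; rewrite -E | move=> eta; rewrite -E].
by case=> [[e he] hb]; split; [exists e; rewrite E | move=> eta; rewrite E].
Qed.
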